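(* Let $q$ be a prime power and $d$ an integer with $5\le d\le q$. Let $\mathcal C$ be the $[q+1,q+2-d,d]_q$ normalized GDRS code and $\mathcal V^{(2)}$ a coset of weight $2$ of $\mathcal C$ with coset leader $\mathbf v_2(j_1,j_2;\gamma_1,\gamma_2)$. Let $\beta$ be a primitive element of $\mathbb F_q$ and let $\lambda(\gamma_1,\gamma_2)\in\mathbb Z_{q-1}$ satisfy $\beta^{\lambda(\gamma_1,\gamma_2)}=-\gamma_2/\gamma_1$. Then the number $B_{d-2}(\mathcal V^{(2)})$ of vectors of weight $d-2$ in $\mathcal V^{(2)}$ does not depend on the positions $j_1,j_2$ and equals $\mathrm P^+_{q-1,d-2}(\lambda(\gamma_1,\gamma_2))$.
   Context: Normalized GDRS code: the $\mathbb F_q$-linear code of length $q+1$ which is the kernel of the $(d-1)\times(q+1)$ matrix whose first $q$ columns are $(1,m,\dots,m^{d-2})^T$, $m$ running over $\mathbb F_q$, and whose last column is $(0,\dots,0,1)^T$. A coset of weight $2$ is a coset $\mathbf v+\mathcal C$ of minimum Hamming weight $2$; a coset leader is a vector of minimum weight in it. $\mathbf v_2(j_1,j_2;\gamma_1,\gamma_2)$ is the vector with $\gamma_1,\gamma_2\in\mathbb F_q^*$ in positions $j_1\ne j_2$ and zeros elsewhere. For positive integers $\mu<R$ and $\lambda\in\mathbb Z_R$, $\mathrm P^+_{R,\mu}(\lambda)$ is the number of $\mu$-element subsets of $\mathbb Z_R$ whose elements sum to $\lambda$ in $\mathbb Z_R$. *)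

(* Defs.v *)
From HB Require Import structures.
From mathcomp Require Import all_boot all_order all_algebra all_field.
Set Implicit Arguments. Unset Strict Implicit. Unset Printing Implicit Defensive.
Import GRing.Theory.
Local Open Scope ring_scope.

(* Coordinates of the normalized GDRS code of length q+1 are indexed by
   option F : position (Some m) is the column (1,m,...,m^(d-2))^T, m in F_q,
   and position None is the last column (0,...,0,1)^T. *)

Definition gdrs_col (F : finFieldType) (d : nat) (j : option F) (i : nat) : F :=
  match j with
  | Some m => m ^+ i
  | None => if i == (d - 2)%N then 1 else 0
  end.

Definition in_gdrs (F : finFieldType) (d : nat) (x : {ffun option F -> F}) : bool :=
  [forall i : 'I_(d - 1), \sum_(j : option F) gdrs_col d j i * x j == 0].

Definition hwt (F : finFieldType) (x : {ffun option F -> F}) : nat :=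
  #|[set j | x j != 0]|.

Definition v2 (F : finFieldType) (j1 j2 : option F) (g1 g2 : F)
  : {ffun option F -> F} :=
  [ffun j => if j == j1 then g1 else if j == j2 then g2 else 0].

Definition coset_weight (F : finFieldType) (d : nat) (v : {ffun option F -> F})
  (w : nat) : Prop :=
  (exists2 x, in_gdrs d (x - v) & hwt x = w) /\
  (forall x, in_gdrs d (x - v) -> (w <= hwt x)%N).

Definition coset_B (F : finFieldType) (d : nat) (v : {ffun option F -> F})
  (w : nat) : nat :=
  #|[set x : {ffun option F -> F} | in_gdrs d (x - v) && (hwt x == w)]|.

Definition Pplus (R mu lam : nat) : nat :=
  #|[set S : {set 'I_R} | (#|S| == mu) && ((\sum_(i in S) (i : nat)) %% R == lam %% R)%N]|.

(* Main.v *)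
Require Import Defs.
From HB Require Import structures.
From mathcomp Require Import all_boot all_order all_algebra all_field.
Import GRing.Theory.
Local Open Scope ring_scope.
From mathcomp Require Import zify ring.
Set Implicit Arguments. Unset Strict Implicit. Unset Printing Implicit Defensive.


Lemma size_prod_set (F : finFieldType) (U : {set F}) :
  size (\prod_(s in U) ('X - s%:P)) = #|U|.+1.
Proof. by rewrite -big_enum size_prod_XsubC cardE. Qed.

Lemma lagrange_id (F : finFieldType) (U : {set F}) (i : nat) :
  (i < #|U|)%N ->
  \sum_(t in U) t ^+ i / \prod_(s in U :\ t) (t - s) = (i == #|U|.-1)%:R.
Proof.
move=> hi.
pose P t := \prod_(s in U :\ t) ('X - s%:P).
have PE t u : (P t).[u] = \prod_(s in U :\ t) (u - s).
  by rewrite /P horner_prod; apply: eq_bigr => s _; rewrite hornerXsubC.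
have Pnz t : t \in U -> (P t).[t] != 0.
  move=> _; rewrite PE prodf_seq_neq0; apply/allP => s _; apply/implyP.
  by rewrite in_setD1 subr_eq0 eq_sym => /andP[].
have Pz t u : u \in U -> u != t -> (P t).[u] = 0.
  move=> uU ut; rewrite PE (bigD1 u) /= ?in_setD1 ?ut ?uU // subrr mul0r //.
have sP t : t \in U -> size (P t) = #|U|.
  move=> tU; rewrite size_prod_set (cardsD1 t U) tU.
  by [].
pose q := \sum_(t in U) (t ^+ i / (P t).[t]) *: P t.
have qE : q = 'X^i.
  apply/eqP; rewrite -subr_eq0; apply/eqP.
  apply: (@roots_geq_poly_eq0 _ _ (enum U)).
  - apply/allP => u; rewrite mem_enum => uU.
    rewrite rootE hornerD hornerN hornerXn /q horner_sum.
    rewrite (bigD1 u) //= big1 ?addr0.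
      by rewrite hornerZ mulfVK ?Pnz // subrr.
    by move=> t /andP[tU tu]; rewrite hornerZ (Pz t u) ?mulr0 // eq_sym.
  - exact: enum_uniq.
  - rewrite -cardE; apply: (leq_trans (size_add _ _)).
    rewrite geq_max size_polyN size_polyXn hi andbT.
    apply: (leq_trans (size_sum _ _ _)).
    apply/bigmax_leqP => t tU.
    by apply: (leq_trans (size_scale_leq _ _)); rewrite sP.
have := congr1 (fun p : {poly F} => p`_(#|U|.-1)) qE.
rewrite coefXn /q coef_sum eq_sym => <-.
apply: eq_bigr => t tU; rewrite coefZ -PE.
have : lead_coef (P t) = 1 by rewrite /P -big_enum lead_coef_prod_XsubC.
by rewrite lead_coefE sP // => ->; rewrite mulr1.
Qed.


Lemma sum_option (F : finFieldType) (f : option F -> F) :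
  \sum_(j : option F) f j = f None + \sum_(m : F) f (Some m).
Proof.
rewrite (bigD1 None) //=; congr (_ + _).
rewrite (reindex_onto Some (fun j => odflt 0 j)) /=; last by case.
by apply: eq_bigl => m; rewrite eqxx.
Qed.

Lemma gdrs_poly (F : finFieldType) (d : nat) (y : {ffun option F -> F})
  (p : {poly F}) : (2 <= d)%N -> in_gdrs d y -> (size p <= d - 1)%N ->
  \sum_(m : F) p.[m] * y (Some m) + p`_(d - 2) * y None = 0.
Proof.
move=> d2 /forallP hy sp.
have -> : p`_(d - 2) = \sum_(i < d - 1) p`_i * (if i == (d - 2)%N :> nat then 1 else 0).
  have hlt : (d - 2 < d - 1)%N by rewrite ltn_sub2l.
  rewrite (bigD1 (Ordinal hlt)) //= eqxx mulr1 big1 ?addr0 // => i /negbTE.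
  by rewrite -val_eqE /= => ->; rewrite mulr0.
have -> : \sum_(m : F) p.[m] * y (Some m) =
          \sum_(m : F) \sum_(i < d - 1) p`_i * (m ^+ i * y (Some m)).
  apply: eq_bigr => m _; rewrite (horner_coef_wide m sp) mulr_suml.
  by apply: eq_bigr => i _; rewrite mulrA.
rewrite exchange_big /= big_distrl -big_split /=.
apply: big1 => i _; rewrite -mulrA -mulr_sumr -mulrDr.
have := eqP (hy i); rewrite sum_option /= addrC => ->; by rewrite mulr0.
Qed.


Definition ev (F : finFieldType) (j : option F) (s : F) : F :=
  if j is Some m then m - s else 1.
Definition EE (F : finFieldType) (j : option F) (S : {set option F}) : F :=
  \prod_(s : F | Some s \in S) ev j s.

Lemma card_fin (F : finFieldType) (S : {set option F}) :
  #|S| = ((None \in S) + #|[set s : F | Some s \in S]|)%N.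
Proof.
rewrite (cardsD1 None S); congr (_ + _)%N.
have -> : S :\ None = Some @: [set s : F | Some s \in S].
  apply/setP => j; rewrite in_setD1; case: j => [m|] /=.
  - by rewrite mem_imset ?inE // => a b [].
  - apply/esym/imsetP => -[x _] //.
by rewrite card_imset // => a b [].
Qed.

Lemma EE_in (F : finFieldType) (m : F) (S : {set option F}) :
  Some m \in S -> EE (Some m) S = 0.
Proof. by move=> hm; rewrite /EE (bigD1 m) //= subrr mul0r. Qed.

Lemma EE_neq0 (F : finFieldType) (j : option F) (S : {set option F}) :
  j \notin S -> EE j S != 0.
Proof.
move=> hj; rewrite /EE prodf_seq_neq0; apply/allP => s _; apply/implyP => hs.
case: j hj => [m|] //= hm; last exact: oner_neq0.
by rewrite subr_eq0; apply: contraNneq hm => ->.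
Qed.

Lemma key (F : finFieldType) (d : nat) (y : {ffun option F -> F})
  (S : {set option F}) : (2 <= d)%N -> in_gdrs d y -> (#|S| <= d - 2)%N ->
  [|| None \in S, y None == 0 | #|S| == (d - 2)%N] ->
  \sum_(j | j \notin S) EE j S * y j = 0.
Proof.
move=> d2 hy hS hor.
pose U := [set s : F | Some s \in S].
pose p := \prod_(s in U) ('X - s%:P).
have cS := card_fin S; rewrite -/U in cS.
have sp : size p = #|U|.+1 by rewrite /p -big_enum size_prod_XsubC cardE.
have hp := @gdrs_poly F d y p d2 hy.
have pE m : p.[m] = EE (Some m) S.
  rewrite /p horner_prod /EE; apply: eq_big => [s|s _]; first by rewrite inE.
  by rewrite hornerXsubC.
rewrite -[RHS]hp; last first.
  rewrite sp; move: hS; rewrite cS.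
  case: (None \in S) => /=; rewrite ?add0n ?add1n => h.
    by apply: leq_trans (leq_trans h _); rewrite ?leq_sub2l.
  by apply: leq_ltn_trans h _; rewrite ltn_sub2l // (leq_trans _ d2).
rewrite big_mkcond sum_option /= addrC; congr (_ + _).
  apply: eq_bigr => m _; rewrite pE; case: ifP => // /negbFE /EE_in ->.
  by rewrite mul0r.
case hN: (None \in S) => /=.
  rewrite nth_default ?mul0r // sp.
  move: hS; rewrite cS hN add1n => h.
  by rewrite (leq_trans h) // leq_sub2l.
rewrite /EE big1 ?mul1r //.
case/orP: hor; first by rewrite hN.
case/orP => [/eqP -> | hc]; first by rewrite mulr0.
have hU : #|U| = (d - 2)%N by move: hc; rewrite cS hN add0n => /eqP.
have : lead_coef p = 1 by rewrite /p -big_enum lead_coef_prod_XsubC.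
by rewrite lead_coefE sp hU /= => ->; rewrite mul1r.
Qed.


Lemma sum_single (F : finFieldType) (S : {set option F}) (y : {ffun option F -> F})
  (f : option F -> F) (j0 : option F) : j0 \notin S ->
  (forall j, j \notin S -> j != j0 -> y j = 0) ->
  \sum_(j | j \notin S) f j * y j = f j0 * y j0.
Proof.
move=> hj0 hz; rewrite (bigD1 j0) //= big1 ?addr0 // => j /andP[hj hne].
by rewrite hz ?mulr0.
Qed.

Lemma min_dist (F : finFieldType) (d : nat) (y : {ffun option F -> F}) :
  (2 <= d)%N -> in_gdrs d y -> (hwt y < d)%N -> y = 0.
Proof.
move=> d2 hy hw.
have hfin : forall t, y (Some t) = 0.
  move=> t; apply/eqP/negP => /negP ht.
  pose S := [set j | y j != 0] :\ Some t.
  have hS0 : Some t \in [set j | y j != 0] by rewrite inE.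
  have cS : #|S| = (hwt y).-1 by rewrite /hwt [in RHS](cardsD1 (Some t)) hS0.
  have hSle : (#|S| <= d - 2)%N.
    rewrite cS; move: hw; case: (hwt y) => [|n] /=; first by rewrite leq0n.
    move=> h; lia.
  have hcond : [|| None \in S, y None == 0 | #|S| == (d - 2)%N].
    have [hN|hN] := eqVneq (y None) 0; first by rewrite orbT.
    by rewrite /S in_setD1 inE hN.
  have hk := @key F d y S d2 hy hSle hcond.
  rewrite (@sum_single F S y _ (Some t)) in hk.
  - move/eqP: hk; rewrite mulf_eq0 (negbTE ht) orbF; apply/negP.
    by apply: EE_neq0; rewrite /S in_setD1 eqxx.
  - by rewrite /S in_setD1 eqxx.
  - move=> j hj hne; move: hj; rewrite /S in_setD1 hne /= inE negbK => /eqP h; exact: h.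
have hN : y None = 0.
  have := @gdrs_poly F d y 'X^(d - 2) d2 hy.
  rewrite size_polyXn coefXn eqxx mul1r.
  rewrite big1 ?add0r; last by move=> m _; rewrite hfin mulr0.
  by apply; rewrite -subSn // subSS.
by apply/ffunP => -[t|]; rewrite ffunE ?hfin ?hN.
Qed.


Lemma exist_cw (F : finFieldType) (d : nat) (T : {set option F}) :
  (2 <= d)%N -> #|T| = d ->
  exists c : {ffun option F -> F}, in_gdrs d c /\ forall j, (c j != 0) = (j \in T).
Proof.
move=> d2 hT.
pose U := [set s : F | Some s \in T].
have cT := card_fin T; rewrite -/U in cT.
pose f (j : option F) : F := match j with
   | Some t => if Some t \in T then (\prod_(s in U :\ t) (t - s))^-1 else 0
   | None => if None \in T then -1 else 0 end.
pose c : {ffun option F -> F} := [ffun j => f j].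
exists c; split.
  apply/forallP => i; rewrite sum_option /c !ffunE /f /=.
  under eq_bigr => t _ do rewrite ffunE.
  have -> : \sum_(t : F) (t ^+ i * (if Some t \in T then (\prod_(s in U :\ t) (t - s))^-1 else 0))
      = \sum_(t in U) t ^+ i / \prod_(s in U :\ t) (t - s).
    rewrite [RHS]big_mkcond; apply: eq_bigr => t _; rewrite inE.
    by case: ifP => _; rewrite ?mulr0.
  case hN: (None \in T).
    move: cT; rewrite hN add1n => cT.
    rewrite lagrange_id; last by have := ltn_ord i; lia.
    have -> : (#|U|.-1 = d - 2)%N by have := ltn_ord i; lia.
    by case: (i == (d - 2)%N :> nat); rewrite ?mul1r ?mul0r ?addNr ?addr0.
  move: cT; rewrite hN add0n => cT.
  rewrite lagrange_id; last by have := ltn_ord i; lia.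
  have -> : (i == #|U|.-1 :> nat) = false by apply/eqP; have := ltn_ord i; lia.
  by rewrite mulr0 add0r.
case=> [t|]; rewrite /c ffunE /f /=.
  case: ifP => ht; last by rewrite eqxx.
  rewrite invr_eq0 prodf_seq_neq0; apply/allP => s _; apply/implyP.
  by rewrite in_setD1 subr_eq0 eq_sym => /andP[].
by case: ifP => _; rewrite ?oppr_eq0 ?oner_eq0 ?eqxx.
Qed.


Lemma ffB (F : finFieldType) (a b : {ffun option F -> F}) j : (a - b) j = a j - b j.
Proof. by rewrite !ffunE. Qed.
Lemma ffD (F : finFieldType) (a b : {ffun option F -> F}) j : (a + b) j = a j + b j.
Proof. by rewrite !ffunE. Qed.

Lemma gdrs_sub (F : finFieldType) d (a b : {ffun option F -> F}) :
  in_gdrs d a -> in_gdrs d b -> in_gdrs d (a - b).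
Proof.
move=> /forallP ha /forallP hb; apply/forallP => i.
rewrite (eq_bigr (fun j => gdrs_col d j i * a j - gdrs_col d j i * b j)); last first.
  by move=> j _; rewrite ffB mulrBr.
by rewrite sumrB (eqP (ha i)) (eqP (hb i)) subrr.
Qed.

Lemma gdrs_scale (F : finFieldType) d (k : F) (a : {ffun option F -> F}) :
  in_gdrs d a -> in_gdrs d [ffun j => k * a j].
Proof.
move=> /forallP ha; apply/forallP => i.
rewrite (eq_bigr (fun j => k * (gdrs_col d j i * a j))); last first.
  by move=> j _; rewrite ffunE mulrCA.
by rewrite -mulr_sumr (eqP (ha i)) mulr0.
Qed.

Lemma prod_option (F : finFieldType) (f : option F -> F) :
  \prod_(j : option F) f j = f None * \prod_(m : F) f (Some m).
Proof.
rewrite (bigD1 None) //=; congr (_ * _).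
rewrite (reindex_onto Some (fun j => odflt 0 j)) /=; last by case.
by apply: eq_bigl => m; rewrite eqxx.
Qed.

Definition rr (F : finFieldType) (j1 j2 s : option F) : F :=
  if s is Some s' then ev j1 s' / ev j2 s' else 1.

Lemma EE_ratio (F : finFieldType) (j1 j2 : option F) (S : {set option F}) :
  EE j1 S / EE j2 S = \prod_(s in S) rr j1 j2 s.
Proof.
rewrite /EE -prodf_div [RHS]big_mkcond prod_option /= [LHS]big_mkcond /=.
by rewrite if_same mul1r.
Qed.

Lemma ev_neq0 (F : finFieldType) (j : option F) (s : F) : Some s != j -> ev j s != 0.
Proof.
case: j => [m|] //= h; last exact: oner_neq0.
by rewrite subr_eq0; apply: contraNneq h => ->.
Qed.

Lemma rr_neq0 (F : finFieldType) (j1 j2 s : option F) :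
  s != j1 -> s != j2 -> rr j1 j2 s != 0.
Proof.
case: s => [s|] h1 h2 /=; last exact: oner_neq0.
by rewrite mulf_neq0 ?invr_eq0 ?ev_neq0.
Qed.

Lemma rr_inj (F : finFieldType) (j1 j2 a b : option F) : j1 != j2 ->
  a != j1 -> a != j2 -> b != j1 -> b != j2 -> rr j1 j2 a = rr j1 j2 b -> a = b.
Proof.
case: j1 => [m1|]; case: j2 => [m2|] //= hj.
- have hm : m1 - m2 != 0 by rewrite subr_eq0; apply: contraNneq hj => ->.
  have key (s : F) : Some s != Some m1 -> Some s != Some m2 ->
       (m1 - s) / (m2 - s) != 1.
    move=> h1 h2; have hz : m2 - s != 0.
      by rewrite subr_eq0; apply: contraNneq h2 => ->.
    apply/eqP => h; have : m1 - s = m2 - s by rewrite -(divfK hz (m1 - s)) h mul1r.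
    have -> : m1 - s = (m1 - m2) + (m2 - s) by ring.
    by move/eqP; rewrite -subr_eq0 addrK (negbTE hm).
  case: a => [a|]; case: b => [b|] //= ha1 ha2 hb1 hb2.
  + move/eqP; rewrite eqr_div ?(@ev_neq0 _ (Some m2)) // -subr_eq0.
    have -> : (m1 - a) * (m2 - b) - (m1 - b) * (m2 - a) = (m1 - m2) * (a - b) by ring.
    by rewrite mulf_eq0 (negbTE hm) /= subr_eq0 => /eqP ->.
  + by move=> h; move: (key a ha1 ha2); rewrite h eqxx.
  + by move=> h; move: (key b hb1 hb2); rewrite -h eqxx.
- case: a => [a|]; case: b => [b|] //= ha1 ha2 hb1 hb2.
  rewrite !divr1 => /eqP; rewrite -subr_eq0.
  have -> : m1 - a - (m1 - b) = b - a by ring.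
  by rewrite subr_eq0 => /eqP ->.
- case: a => [a|]; case: b => [b|] //= ha1 ha2 hb1 hb2.
  rewrite !div1r => /invr_inj /eqP; rewrite -subr_eq0.
  have -> : m2 - a - (m2 - b) = b - a by ring.
  by rewrite subr_eq0 => /eqP ->.
Qed.

Lemma dlog (F : finFieldType) (beta z : F) :
  (#|F|.-1).-primitive_root beta -> z != 0 ->
  exists i : 'I_(#|F|.-1), beta ^+ i = z.
Proof.
move=> hb hz.
have hq : #|F| = (#|F|.-1).+1.
  by rewrite prednK // (cardD1 0) inE.
have h1 : z ^+ (#|F|.-1) = 1.
  apply: (mulfI hz); rewrite -exprS -hq expf_card mulr1 //.
have [i ->] := prim_rootP hb h1; by exists i.
Qed.


Lemma sum_two (F : finFieldType) (S : {set option F}) (y : {ffun option F -> F})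
  (f : option F -> F) (j1 j2 : option F) : j1 != j2 -> j1 \notin S -> j2 \notin S ->
  (forall j, j \notin S -> j != j1 -> j != j2 -> y j = 0) ->
  \sum_(j | j \notin S) f j * y j = f j1 * y j1 + f j2 * y j2.
Proof.
move=> hj h1 h2 hz; rewrite (bigD1 j1) //= (bigD1 j2) /=; last by rewrite h2 eq_sym.
rewrite big1 ?addr0 // => j /andP[/andP[hj1 hne1] hne2].
by rewrite hz ?mulr0.
Qed.

Unset Implicit Arguments.

Theorem corollary3p7 (F : finFieldType) (d : nat)
  (hd5 : (5 <= d)%N) (hdq : (d <= #|F|)%N)
  (j1 j2 : option F) (g1 g2 : F)
  (hj : j1 != j2) (hg1 : g1 != 0) (hg2 : g2 != 0)
  (hcoset : coset_weight d (v2 j1 j2 g1 g2) 2)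
  (beta : F) (hbeta : (#|F|.-1).-primitive_root beta)
  (lam : 'I_(#|F|.-1)) (hlam : beta ^+ lam = - g2 / g1) :
  coset_B d (v2 j1 j2 g1 g2) (d - 2) = Pplus #|F|.-1 (d - 2) lam.
Proof.
have d2 : (2 <= d)%N by lia.
set v := v2 j1 j2 g1 g2.
have vE j : v j = if j == j1 then g1 else if j == j2 then g2 else 0.
  by rewrite /v /v2 ffunE.
pose K := [set s | (s != j1) && (s != j2)].
have inK s : (s \in K) = (s != j1) && (s != j2) by rewrite inE.
pose lg (z : F) : 'I_(#|F|.-1) := odflt lam [pick i : 'I_(#|F|.-1) | beta ^+ i == z].
have lgE z : z != 0 -> beta ^+ (lg z) = z.
  move=> hz; rewrite /lg; case: pickP => [i /eqP //|h].
  have [i hi] := dlog hbeta hz; by move: (h i); rewrite hi eqxx.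
pose psi s := lg (rr j1 j2 s).
have psiE s : s \in K -> beta ^+ (psi s) = rr j1 j2 s.
  by rewrite inK => /andP[h1 h2]; apply: lgE; apply: rr_neq0.
have psi_inj : {in K &, injective psi}.
  move=> a b ha hb h; have := psiE a ha; rewrite h psiE // => hr.
  move: ha hb; rewrite !inK => /andP[ha1 ha2] /andP[hb1 hb2].
  exact: (rr_inj hj ha1 ha2 hb1 hb2 (esym hr)).
have cK : #|K| = #|F|.-1.
  have := cardsC [set j1; j2]; rewrite cards2 hj card_option.
  have -> : ~: [set j1; j2] = K by apply/setP => s; rewrite !inE negb_or.
  rewrite /=; lia.
have psiK : psi @: K = setT.
  by apply/eqP; rewrite eqEcard subsetT cardsT card_ord card_in_imset // cK leqnn.
have sub_im (S1 S2 : {set option F}) : S1 \subset K -> S2 \subset K -> psi @: S1 \subset psi @: S2 ->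
    S1 \subset S2.
  move=> h1 h2 h; apply/subsetP => s hs.
  have := (subsetP h) _ (imset_f psi hs); case/imsetP => s' hs' he.
  by rewrite (psi_inj s s' ((subsetP h1) _ hs) ((subsetP h2) _ hs') he).
have im_inj (S1 S2 : {set option F}) : S1 \subset K -> S2 \subset K -> psi @: S1 = psi @: S2 -> S1 = S2.
  move=> h1 h2 he; apply/eqP; rewrite eqEsubset.
  by rewrite (sub_im S1 S2) ?he // (sub_im S2 S1) ?he.
have vnz : forall j, (v j != 0) = (j \in [set j1; j2]).
  move=> j; rewrite vE !inE; case: (eqVneq j j1) => // _.
  by case: (eqVneq j j2) => //; rewrite eqxx.
have hwtv : hwt v = 2%N.
  rewrite /hwt (_ : [set j | v j != 0] = [set j1; j2]) ?cards2 ?hj //.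
  by apply/setP => j; rewrite inE vnz.
have Aprop x : in_gdrs d (x - v) -> hwt x = (d - 2)%N ->
    [set j | x j != 0] \subset K /\
    g1 * EE j1 [set j | x j != 0] + g2 * EE j2 [set j | x j != 0] = 0.
  move=> hc hw.
  pose S := [set j | x j != 0].
  have hS : #|S| = (d - 2)%N by [].
  have hz : forall j, j \in [set j1; j2] -> x j = 0.
    move=> j hj12; apply/eqP/negP => /negP hxj.
    have hy0 : x - v = 0.
      apply: min_dist d2 hc _.
      have sub : [set j | (x - v) j != 0] \subset S :|: [set j1; j2].
        apply/subsetP => i; rewrite !inE ffB; apply: contraR.
        rewrite negb_or => /andP[]; rewrite negbK => /eqP -> h12.
        by move: h12; rewrite negb_or vE => /andP[/negbTE -> /negbTE ->]; rewrite subrr.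
      have hI : (0 < #|S :&: [set j1; j2]|)%N.
        by apply/card_gt0P; exists j; rewrite inE hj12 andbT inE.
      have := cardsUI S [set j1; j2]; rewrite cards2 hj hS /=.
      have := subset_leq_card sub; rewrite /hwt; move=> h1 h2; apply: (leq_ltn_trans h1); move: hI h2 hd5; set a := #|S :&: _|; set b := #|S :|: _|; lia.
    move/eqP: hy0; rewrite subr_eq0 => /eqP hxv.
    by move: hw; rewrite hxv hwtv; lia.
  have h1S : j1 \notin S by rewrite inE negbK hz // !inE eqxx.
  have h2S : j2 \notin S by rewrite inE negbK hz // !inE eqxx orbT.
  split.
    apply/subsetP => j; rewrite inE inK => hxj.
    by apply/andP; split; apply: contra hxj => /eqP ->; rewrite hz ?inE ?eqxx ?orbT.
  have hcond : [|| None \in S, (x - v) None == 0 | #|S| == (d - 2)%N].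
    by rewrite hS eqxx !orbT.
  have hk := @key F d (x - v) S d2 hc (eq_leq hS) hcond.
  rewrite (@sum_two F S (x - v) _ j1 j2 hj h1S h2S) in hk; last first.
    move=> j; rewrite inE negbK ffB vE => /eqP -> /negbTE -> /negbTE ->.
    by rewrite subrr.
  move: hk; rewrite !ffB !vE eqxx eq_sym (negbTE hj) eqxx !hz ?inE ?eqxx ?orbT //.
  move=> hk; apply/eqP; rewrite -oppr_eq0; apply/eqP; rewrite -[RHS]hk; ring.
have EE2nz (S : {set option F}) : S \subset K -> EE j2 S != 0.
  move=> hS; apply: EE_neq0; apply/negP => /(subsetP hS); rewrite inK eqxx andbF.
  by [].
have cond (S : {set option F}) : S \subset K ->
  (g1 * EE j1 S + g2 * EE j2 S == 0) =
  ((\sum_(s in S) (psi s : nat)) == lam %[mod #|F|.-1])%N.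
  move=> hS.
  rewrite -(eq_prim_root_expr hbeta) hlam -prodrXr.
  rewrite (eq_bigr (fun s => rr j1 j2 s)); last first.
    by move=> s hs; apply: psiE; exact: (subsetP hS).
  rewrite -EE_ratio eqr_div ?EE2nz // addr_eq0 mulrC mulNr.
  by [].
rewrite /coset_B /Pplus.
set A := [set x : {ffun option F -> F} | in_gdrs d (x - v) && (hwt x == (d - 2)%N)].
have injA : {in A &, injective (fun x : {ffun option F -> F} => psi @: [set j | x j != 0])}.
  move=> x1 x2; rewrite !inE => /andP[hc1 /eqP hw1] /andP[hc2 /eqP hw2] /= he.
  have [hK1 _] := Aprop x1 hc1 hw1.
  have [hK2 _] := Aprop x2 hc2 hw2.
  have hs := im_inj _ _ hK1 hK2 he.
  have h0 : x1 - x2 = 0.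
    apply: min_dist d2 _ _.
      have -> : x1 - x2 = (x1 - v) - (x2 - v) by rewrite opprB addrA subrK.
      exact: gdrs_sub.
    rewrite /hwt; apply: (@leq_ltn_trans #|[set j | x1 j != 0]|).
      apply: subset_leq_card; apply/subsetP => j; rewrite !inE ffB.
      apply: contraLR; rewrite !negbK => /eqP h1.
      have := congr1 (fun S : {set option F} => j \in S) hs.
      by rewrite /= !inE h1 eqxx /= => /esym/negbFE/eqP ->; rewrite subrr.
    move: hw1; rewrite /hwt => ->; lia.
  by apply/eqP; rewrite -subr_eq0 h0.
rewrite -(card_in_imset injA); apply: eq_card => S'; rewrite [in RHS]inE.
apply/imsetP/andP.
  case=> x; rewrite inE => /andP[hc /eqP hw] ->.
  have [hK hE] := Aprop x hc hw.
  have injS : {in [set j | x j != 0] &, injective psi}.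
    by move=> a b ha hb; apply: psi_inj; apply: (subsetP hK).
  split; first by rewrite card_in_imset // -hw.
  by rewrite big_imset //= -cond // hE.
case=> /eqP hcard hsum.
pose S := [set s in K | psi s \in S'].
have SK : S \subset K by apply/subsetP => s; rewrite inE => /andP[].
have imS : psi @: S = S'.
  apply/setP => k; apply/imsetP/idP => [[s]|hk].
    by rewrite inE => /andP[_ h] ->.
  have : k \in psi @: K by rewrite psiK inE.
  by case/imsetP => s hs hks; exists s => //; rewrite inE hs -hks hk.
have injS : {in S &, injective psi}.
  by move=> a b ha hb; apply: psi_inj; apply: (subsetP SK).
have cS : #|S| = (d - 2)%N by rewrite -(card_in_imset injS) imS.
have hE : g1 * EE j1 S + g2 * EE j2 S = 0.
  by apply/eqP; rewrite cond //; move: hsum; rewrite -imS big_imset.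
have h1S : j1 \notin S by apply/negP => /(subsetP SK); rewrite inK eqxx.
have h2S : j2 \notin S by apply/negP => /(subsetP SK); rewrite inK eqxx andbF.
have hT : #|j1 |: (j2 |: S)| = d.
  rewrite cardsU1 cardsU1 h2S in_setU1 negb_or hj (negbTE h1S) cS /=; lia.
have [c [hc hcT]] := exist_cw d2 hT.
have hcond : [|| None \in S, c None == 0 | #|S| == (d - 2)%N].
  by rewrite cS eqxx !orbT.
have hk := @key F d c S d2 hc (eq_leq cS) hcond.
rewrite (@sum_two F S c _ j1 j2 hj h1S h2S) in hk; last first.
  move=> j hjS hj1 hj2; apply/eqP; apply/negbNE; rewrite hcT !in_setU1.
  by rewrite (negbTE hj1) (negbTE hj2) /=.
have hc1 : c j1 != 0 by rewrite hcT !in_setU1 eqxx.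
pose k := - g1 / c j1.
have hk0 : k != 0 by rewrite /k mulf_neq0 ?oppr_eq0 ?invr_eq0.
pose x := v + [ffun j => k * c j].
have hxv : x - v = [ffun j => k * c j] by rewrite /x addrC addKr.
have hj2x : g2 + k * c j2 = 0.
  have e : (g2 + k * c j2) * (c j1 * EE j2 S) =
      c j1 * (g1 * EE j1 S + g2 * EE j2 S) - g1 * (EE j1 S * c j1 + EE j2 S * c j2).
    by rewrite /k; field.
  move: e; rewrite hE hk !mulr0 subr0 => /eqP.
  by rewrite mulf_eq0 mulf_eq0 (negbTE hc1) (negbTE (EE2nz S SK)) /= orbF => /eqP.
have hsupp : [set j | x j != 0] = S.
  apply/setP => j; rewrite [in LHS]inE /x ffD vE ffunE.
  case: (eqVneq j j1) => [->|hj1].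
    by rewrite /k divfK // addrN eqxx (negbTE h1S).
  case: (eqVneq j j2) => [->|hj2]; first by rewrite hj2x eqxx (negbTE h2S).
  rewrite add0r mulf_eq0 (negbTE hk0) /= hcT !in_setU1 (negbTE hj1) (negbTE hj2) /=.
  by [].
exists x; last by rewrite hsupp imS.
rewrite inE hxv gdrs_scale //= /hwt hsupp cS eqxx.
by [].
Qed.
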